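(* Let $\Theta\subset\mathbb{R}^{n_\theta}$ be a box and let $g_1,\dots,g_N:\Theta\to\mathbb{R}$ be unknown constraint functions, modeled as sample paths of mutually independent Gaussian processes; all probabilities below are taken with respect to this Gaussian process model. For each $i\in[N]$ let $c_i:\mathbb{R}_{\ge0}\to\mathbb{R}_{\ge0}$ be a violation function satisfying (A1) $c_i(0)=0$, (A2) $c_i(s_1)\ge c_i(s_2)$ whenever $s_1>s_2\ge0$, (A3) $c_i$ is left continuous on $\mathbb{R}_{\ge0}$, and define the violation cost $\bar c_i(\theta)=c_i([g_i(\theta)]^+)$ with $[x]^+=\max\{x,0\}$. Fix budgets $B_i\ge0$, $i\in[N]$, a horizon $T\in\mathbb{N}$ and $\delta\in(0,1)$, and choose $\epsilon_t\in(0,1)$, $t\in[T]$, such that $\delta=1-\prod_{t=1}^T(1-\epsilon_t)$. Consider the following violation-aware sequential procedure (VABO). Start from a dataset $\mathcal{D}_0$ consisting of the (noise-free) evaluations of the $g_i$ (and of the objective) at the points of a nonempty initial set $\Theta_0\subset\Theta$ on which $g_i\le 0$ for all $i$. For $t=1,2,\dots,T$: let $B_{i,t}=B_i-\sum_{\tau=1}^{t-1}\bar c_i(\theta_\tau)$ be the remaining budgets; choose weights $\beta_{i,t}\in(0,1]$ and a point $\theta_t\in\Theta$, both determined by $\mathcal{D}_{t-1}$, such that $$\prod_{i\in[N]}\Pr\big(\bar c_i(\theta_t)\le \beta_{i,t}B_{i,t}\,\big|\,\mathcal{D}_{t-1}\big)\ \ge\ 1-\epsilon_t$$ (assume such a point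 exists at every iteration; e.g. $\theta_t$ maximizes the constrained expected improvement over the set of such points); evaluate $g_i(\theta_t)$ for all $i$ (and the objective), set $B_{i,t+1}=B_{i,t}-\bar c_i(\theta_t)$ and $\mathcal{D}_t=\mathcal{D}_{t-1}\cup\{(\theta_t,\text{evaluations})\}$; if $B_{i,t+1}<0$ for some $i\in[N]$, terminate. Then $$\Pr\Big(\{\text{all } T \text{ iterations are performed}\}\cap\Big\{\sum_{t=1}^T\bar c_i(\theta_t)\le B_i\ \ \forall i\in[N]\Big\}\Big)\ \ge\ 1-\delta .$$
   Context: $[N]=\{1,\dots,N\}$. The conditional probability $\Pr(\cdot\mid\mathcal{D}_{t-1})$ is the Gaussian process posterior given the data collected up to iteration $t-1$; because the $g_i$ are modeled as independent Gaussian processes, the product of the marginal posterior probabilities over $i$ equals the posterior probability that all $N$ events hold simultaneously. *)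

(* Defs.v *)
From HB Require Import structures.
From mathcomp Require Import all_boot all_order all_algebra.
From mathcomp Require Import all_classical all_reals all_analysis.
Set Implicit Arguments. Unset Strict Implicit. Unset Printing Implicit Defensive.
Import Order.TTheory GRing.Theory Num.Theory numFieldTopology.Exports.
Local Open Scope classical_set_scope.
Local Open Scope ring_scope.

Section VABO_defs.
Context {R : realType} {d : measure_display} {Omega : measurableType d}.

Definition box (n : nat) (lo hi : 'I_n -> R) : set 'rV[R]_n :=
  [set x | forall j, lo j <= x ord0 j <= hi j].

Definition gen_sigma (F : set (Omega -> R)) : set (set Omega) :=
  <<s [set E | exists2 X, F X & exists2 B : set R, measurable B & E = X @^-1` B] >>.

(** [h] is (a version of) the conditional probability Pr(A | F) of the event A
    given the sub-sigma-algebra F: h is F-measurable and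
    int_G h dP = P (A /\ G) for every G in F. *)
Definition is_cond_prob (P : probability Omega R) (F : set (set Omega))
    (A : set Omega) (h : Omega -> R) : Prop :=
  (forall B : set R, measurable B -> F (h @^-1` B)) /\
  (forall G, F G -> (\int[P]_(w in G) (h w)%:E = P (A `&` G))%E).

Definition gaussian_rv (P : probability Omega R) (Y : Omega -> R) : Prop :=
  measurable_fun setT Y /\
  exists m : R,
    (forall B : set R, measurable B -> P (Y @^-1` B) = \d_m B) \/
    (exists2 s : R, 0 < s &
       forall B : set R, measurable B -> P (Y @^-1` B) = normal_prob m s B).

Definition gaussian_process (n : nat) (P : probability Omega R)
    (Theta : set 'rV[R]_n) (X : Omega -> 'rV[R]_n -> R) : Prop :=
  forall (s : seq 'rV[R]_n) (a : seq R),
    (forall x, x \in s -> Theta x) ->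
    gaussian_rv P (fun w => \sum_(k < size s) a`_k * X w s`_k).

Definition field_sigma (n : nat) (Theta : set 'rV[R]_n)
    (X : Omega -> 'rV[R]_n -> R) : set (set Omega) :=
  gen_sigma [set Y | exists2 x, Theta x & Y = fun w => X w x].

Definition mutually_independent_fields (n N : nat) (P : probability Omega R)
    (Theta : set 'rV[R]_n) (g : 'I_N -> Omega -> 'rV[R]_n -> R) : Prop :=
  forall E : 'I_N -> set Omega,
    (forall i, field_sigma Theta (g i) (E i)) ->
    P (\bigcap_(i in [set: 'I_N]) E i) = (\prod_(i < N) fine (P (E i)))%:E.

Definition pos_part (x : R) : R := Num.max x 0.

Definition viol_cost (n N : nat) (c : 'I_N -> R -> R)
    (g : 'I_N -> Omega -> 'rV[R]_n -> R) (i : 'I_N) (w : Omega)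
    (x : 'rV[R]_n) : R :=
  c i (pos_part (g i w x)).

Definition rem_budget (n N : nat) (c : 'I_N -> R -> R)
    (g : 'I_N -> Omega -> 'rV[R]_n -> R) (B : 'I_N -> R)
    (theta : nat -> Omega -> 'rV[R]_n) (i : 'I_N) (t : nat) (w : Omega) : R :=
  B i - \sum_(1 <= tau < t) viol_cost c g i w (theta tau w).

Definition data_rvs (n N : nat) (g : 'I_N -> Omega -> 'rV[R]_n -> R)
    (f : Omega -> 'rV[R]_n -> R) (theta0 : seq 'rV[R]_n)
    (theta : nat -> Omega -> 'rV[R]_n) (t : nat) : set (Omega -> R) :=
  [set X |
     (exists i x, x \in theta0 /\ X = fun w => g i w x) \/
     (exists x, x \in theta0 /\ X = fun w => f w x) \/
     (exists tau j, (1 <= tau <= t)%N /\ X = fun w => theta tau w ord0 j) \/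
     (exists i tau, (1 <= tau <= t)%N /\ X = fun w => g i w (theta tau w)) \/
     (exists tau, (1 <= tau <= t)%N /\ X = fun w => f w (theta tau w))].

Definition data_sigma (n N : nat) (g : 'I_N -> Omega -> 'rV[R]_n -> R)
    (f : Omega -> 'rV[R]_n -> R) (theta0 : seq 'rV[R]_n)
    (theta : nat -> Omega -> 'rV[R]_n) (t : nat) : set (set Omega) :=
  gen_sigma (data_rvs g f theta0 theta t).

(** iteration t is performed: the procedure did not terminate after any of
    the iterations 1..t-1, i.e. B_{i,tau+1} >= 0 for all i, 1 <= tau < t. *)
Definition iteration_performed (n N : nat) (c : 'I_N -> R -> R)
    (g : 'I_N -> Omega -> 'rV[R]_n -> R) (B : 'I_N -> R)
    (theta : nat -> Omega -> 'rV[R]_n) (t : nat) : set Omega :=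
  [set w | forall tau, (1 <= tau < t)%N ->
      forall i, 0 <= rem_budget c g B theta i tau.+1 w].

End VABO_defs.

(* Main.v *)
Require Import Defs.
From HB Require Import structures.
From mathcomp Require Import all_boot all_order all_algebra.
From mathcomp Require Import all_classical all_reals all_analysis.
From mathcomp Require Import measurable_realfun zify ring lra.
Import Order.TTheory GRing.Theory Num.Theory numFieldTopology.Exports.
Local Open Scope classical_set_scope.
Local Open Scope ring_scope.

Section helpers2.
Context {R : realType} {d : measure_display} {M : measurableType d}.

Lemma mfun_sum_nat (h : nat -> M -> R) a t :
  (forall tau, (a <= tau < t)%N -> measurable_fun setT (h tau)) ->
  measurable_fun setT (fun w => \sum_(a <= tau < t) h tau w).
Proof.
elim: t => [|t IH] H.
  by under eq_fun do rewrite big_geq//; exact: measurable_cst.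
case: (leqP a t) => aLt.
  under eq_fun do rewrite big_nat_recr//=.
  apply: measurable_funD; first by apply: IH => tau Ht; apply: H; lia.
  by apply: H; lia.
by under eq_fun do rewrite big_geq//; exact: measurable_cst.
Qed.

Lemma meas_forall_nat (Q : nat -> set M) t :
  (forall s, (s < t)%N -> measurable (Q s)) ->
  measurable [set w | forall s, (s < t)%N -> Q s w].
Proof.
move=> H.
have -> : [set w | forall s, (s < t)%N -> Q s w] = \bigcap_(s in [set s | (s < t)%N]) Q s.
  by apply/seteqP; split => w /= Hw s Hs; apply: Hw.
exact: bigcap_measurableType.
Qed.

Lemma meas_forall_fin (I : finType) (Q : I -> set M) :
  (forall s, measurable (Q s)) ->
  measurable [set w | forall s, Q s w].
Proof.
move=> H.
have -> : [set w | forall s, Q s w] = \bigcap_(s in setT) Q s.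
  by apply/seteqP; split => w /= Hw s //; apply: Hw.
by apply: fin_bigcap_measurable => //; exact: finite_finset.
Qed.

End helpers2.
Section helpers.
Context {R : realType} {d : measure_display} {Omega : measurableType d}.

Definition SS (Fam : set (Omega -> R)) : set (set Omega) :=
  [set E | exists2 X, Fam X & exists2 B : set R, measurable B & E = X @^-1` B].

Lemma gen_mono (F1 F2 : set (Omega -> R)) :
  F1 `<=` F2 -> gen_sigma F1 `<=` gen_sigma F2.
Proof.
move=> F12; apply: sub_smallest2r; first exact: smallest_sigma_algebra.
by move=> E [X /F12 FX mB]; exists X.
Qed.

Lemma gen_sub (Fam : set (Omega -> R)) :
  (forall X, Fam X -> measurable_fun setT X) -> gen_sigma Fam `<=` measurable.
Proof.
move=> H; apply: smallest_sub; first exact: sigma_algebra_measurable.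
move=> E [X /H mX [B mB ->]]; rewrite -[X @^-1` B]setTI; exact: mX.
Qed.

Lemma mfunP (Fam : set (Omega -> R)) (X : Omega -> R) :
  measurable_fun (setT : set (g_sigma_algebraType (SS Fam))) (X : g_sigma_algebraType (SS Fam) -> R) <->
  (forall B : set R, measurable B -> gen_sigma Fam (X @^-1` B)).
Proof.
split => [mX B mB|H].
  by have := mX measurableT B mB; rewrite setTI.
move=> _ B mB.
by rewrite setTI; exact: H.
Qed.

Lemma gen_mfun (Fam : set (Omega -> R)) X : Fam X ->
  measurable_fun (setT : set (g_sigma_algebraType (SS Fam))) (X : g_sigma_algebraType (SS Fam) -> R).
Proof. move=> FX; apply/(mfunP Fam X) => B mB; apply: sub_gen_smallest; exists X => //; by exists B. Qed.

Lemma gen_meas (Fam : set (Omega -> R)) (E : set Omega) :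
  gen_sigma Fam E <-> measurable (E : set (g_sigma_algebraType (SS Fam))).
Proof. by []. Qed.

Definition MTy (Fam : set (Omega -> R)) := g_sigma_algebraType (SS Fam).
Definition mF (Fam : set (Omega -> R)) (X : Omega -> R) :=
  measurable_fun (setT : set (MTy Fam)) (X : MTy Fam -> R).

Lemma mF_gen Fam X : Fam X -> mF Fam X.
Proof. exact: gen_mfun. Qed.

Lemma mF_pre Fam X : mF Fam X <->
  (forall B : set R, measurable B -> gen_sigma Fam (X @^-1` B)).
Proof. exact: mfunP. Qed.

Lemma mF_mono F1 F2 X : F1 `<=` F2 -> mF F1 X -> mF F2 X.
Proof.
move=> F12 /mF_pre H; apply/mF_pre => B mB; apply: (gen_mono _ _ F12); exact: H.
Qed.

Lemma mF_cst Fam (r : R) : mF Fam (fun=> r).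
Proof. exact: measurable_cst. Qed.

Lemma mF_B Fam X Y : mF Fam X -> mF Fam Y -> mF Fam (fun w => X w - Y w).
Proof. exact: measurable_funB. Qed.

Lemma mF_D Fam X Y : mF Fam X -> mF Fam Y -> mF Fam (fun w => X w + Y w).
Proof. exact: measurable_funD. Qed.

Lemma mF_M Fam X Y : mF Fam X -> mF Fam Y -> mF Fam (fun w => X w * Y w).
Proof. exact: measurable_funM. Qed.

Lemma mF_comp Fam (k : R -> R) X : measurable_fun setT k -> mF Fam X ->
  mF Fam (fun w => k (X w)).
Proof. move=> mk mX; exact: (measurableT_comp mk mX). Qed.

Lemma mF_sum Fam (h : nat -> Omega -> R) a t :
  (forall tau, (a <= tau < t)%N -> mF Fam (h tau)) ->
  mF Fam (fun w => \sum_(a <= tau < t) h tau w).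
Proof. exact: (@mfun_sum_nat _ _ (MTy Fam)). Qed.

Lemma gen_le Fam (X Y : Omega -> R) : mF Fam X -> mF Fam Y ->
  gen_sigma Fam [set w | X w <= Y w].
Proof.
move=> mX mY; have := @measurable_fun_le _ (MTy Fam) R setT X Y measurableT mX mY.
by rewrite setTI.
Qed.

Lemma gen_forall_nat (Fam : set (Omega -> R)) (Q : nat -> set Omega) t :
  (forall s, (s < t)%N -> gen_sigma Fam (Q s)) ->
  gen_sigma Fam [set w | forall s, (s < t)%N -> Q s w].
Proof. exact: (@meas_forall_nat _ (MTy Fam)). Qed.

Lemma gen_forall_fin (Fam : set (Omega -> R)) (I : finType) (Q : I -> set Omega) :
  (forall s, gen_sigma Fam (Q s)) ->
  gen_sigma Fam [set w | forall s, Q s w].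
Proof. exact: (@meas_forall_fin _ (MTy Fam)). Qed.

Lemma gen_I (Fam : set (Omega -> R)) (A B : set Omega) : gen_sigma Fam A -> gen_sigma Fam B ->
  gen_sigma Fam (A `&` B).
Proof. exact: (@measurableI _ (MTy Fam)). Qed.

Lemma gen_T (Fam : set (Omega -> R)) : gen_sigma Fam setT.
Proof. exact: (@measurableT _ (MTy Fam)). Qed.

End helpers.


Theorem proposition1
  (R : realType) (d : measure_display) (Omega : measurableType d)
  (P : probability Omega R)
  (n N : nat) (lo hi : 'I_n -> R)
  (g : 'I_N -> Omega -> 'rV[R]_n -> R)   (* constraint functions *)
  (f : Omega -> 'rV[R]_n -> R)            (* objective *)
  (c : 'I_N -> R -> R)                    (* violation functions *)
  (B : 'I_N -> R)                         (* budgets *)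
  (T : nat) (delta : R) (eps : nat -> R)
  (theta0 : seq 'rV[R]_n)                 (* initial set Theta_0 *)
  (theta : nat -> Omega -> 'rV[R]_n)      (* iterates theta_t, t >= 1 *)
  (beta : 'I_N -> nat -> Omega -> R) :    (* weights beta_{i,t} *)
  let Theta := box lo hi in
  let F := data_sigma g f theta0 theta in
  let cbar := viol_cost c g in
  (* box *)
  (forall j, lo j <= hi j) ->
  (* Gaussian process model, mutually independent g_i *)
  (forall i, gaussian_process P Theta (g i)) ->
  mutually_independent_fields P Theta g ->
  (* well-posedness: evaluations (also at the random iterates) are measurable *)
  (forall x, measurable_fun setT (fun w => f w x)) ->
  (forall t i, measurable_fun setT (fun w => g i w (theta t w))) ->
  (forall t, measurable_fun setT (fun w => f w (theta t w))) ->
  (* violation functions: (A1) (A2) (A3), values in R_{>=0} *)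
  (forall i s, 0 <= s -> 0 <= c i s) ->
  (forall i, c i 0 = 0) ->
  (forall i s1 s2, 0 <= s2 -> s2 < s1 -> c i s2 <= c i s1) ->
  (forall i s, 0 < s -> c i x @[x --> s^'-] --> c i s) ->
  (* budgets, horizon, confidence *)
  (forall i, 0 <= B i) ->
  0 < delta < 1 ->
  (forall t, (1 <= t <= T)%N -> 0 < eps t < 1) ->
  delta = 1 - \prod_(1 <= t < T.+1) (1 - eps t) ->
  (* initial safe set *)
  theta0 != [::] ->
  (forall x, x \in theta0 -> Theta x) ->
  P [set w | forall i x, x \in theta0 -> g i w x <= 0] = 1%E ->
  (* the procedure *)
  (forall t, (1 <= t <= T)%N ->
     (forall w, Theta (theta t w)) /\
     (forall j, forall A : set R, measurable A ->
        F t.-1 ((fun w => theta t w ord0 j) @^-1` A)) /\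
     (forall i, (forall w, 0 < beta i t w <= 1) /\
        forall A : set R, measurable A -> F t.-1 (beta i t @^-1` A)) /\
     let Ev i := [set w | cbar i w (theta t w) <=
                          beta i t w * rem_budget c g B theta i t w] in
     exists h : 'I_N -> Omega -> R,
       (forall i, is_cond_prob P (F t.-1) (Ev i) (h i)) /\
       is_cond_prob P (F t.-1) (\bigcap_(i in [set: 'I_N]) Ev i)
                    (fun w => \prod_(i < N) h i w) /\
       (forall w, iteration_performed c g B theta t w ->
                  1 - eps t <= \prod_(i < N) h i w)) ->
  ((1 - delta)%:E <=
     P (iteration_performed c g B theta T `&`
        [set w | forall i, (\sum_(1 <= t < T.+1) cbar i w (theta t w) <= B i)%R]))%E.
Proof.
move=> Theta F cbar hbox hgp hind hfm hgm hftm hc0 hc00 hcmono hclc hB hdelta heps hdeltaE h0ne h0Th h0safe hproc.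
pose Fam := data_rvs g f theta0 theta.
have FE : forall t, F t = gen_sigma (Fam t) by [].
have Fmono : forall t t', (t <= t')%N -> Fam t `<=` Fam t'.
  move=> t t' tt' X [|[|[|[|]]]].
  - by left.
  - by right; left.
  - move=> [tau [j [Ht ->]]]; right; right; left; exists tau, j; split=> //; lia.
  - move=> [i [tau [Ht ->]]]; right; right; right; left; exists i, tau; split=> //; lia.
  - move=> [tau [Ht ->]]; right; right; right; right; exists tau; split=> //; lia.
have mgx : forall i x, x \in theta0 -> measurable_fun setT (fun w => g i w x).
  move=> i x hx.
  have [H _] := hgp i [:: x] [:: 1] (fun y hy => ltac:(by move: hy; rewrite inE => /eqP ->; exact: h0Th)).
  by move: H; congr measurable_fun; apply/funext => w; rewrite big_ord1 /= mul1r.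
have Fmeas : forall t, (t <= T)%N -> F t `<=` measurable.
  elim=> [|t IH] tT; rewrite FE; apply: gen_sub => X [|[|[|[|]]]].
  - by move=> [i [x [hx ->]]]; exact: mgx.
  - by move=> [x [hx ->]]; exact: hfm.
  - by move=> [tau [j [Ht ->]]]; lia.
  - by move=> [i [tau [_ ->]]]; exact: hgm.
  - by move=> [tau [_ ->]]; exact: hftm.
  - by move=> [i [x [hx ->]]]; exact: mgx.
  - by move=> [x [hx ->]]; exact: hfm.
  - move=> [tau [j [Ht ->]]] _ B0 mB0; rewrite setTI.
    apply: (IH _); first lia.
    rewrite FE; apply: (gen_mono _ _ (Fmono tau.-1 t _)); first lia.
    by have := (hproc tau _).2.1 j B0 mB0; apply; lia.
  - by move=> [i [tau [_ ->]]]; exact: hgm.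
  - by move=> [tau [_ ->]]; exact: hftm.
unfold cbar in *.
have ppos : forall x : R, 0 <= pos_part x by move=> x; rewrite /pos_part le_max lexx orbT.
have ndc : forall i, measurable_fun setT (fun x => c i (pos_part x)).
  move=> i; apply: nondecreasing_measurable => // x y xy.
  have : pos_part x <= pos_part y.
    by rewrite /pos_part ge_max !le_max xy lexx !orbT.
  rewrite le_eqVlt => /orP[/eqP->//|lt]; exact: hcmono.
have mFg : forall t tau i, (1 <= tau <= t)%N -> mF (Fam t) (fun w => g i w (theta tau w)).
  move=> t tau i Ht; apply: mF_gen; right; right; right; left; exists i, tau; split => //.
have mFcbar : forall t tau i, (1 <= tau <= t)%N ->
    mF (Fam t) (fun w => viol_cost c g i w (theta tau w)).
  move=> t tau i Ht; rewrite /viol_cost; apply: (@mF_comp _ _ _ _ (fun x => c i (pos_part x)) (fun w => g i w (theta tau w))); [exact: ndc|exact: mFg].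
have mFrem : forall t s i, (s <= t.+1)%N -> mF (Fam t) (rem_budget c g B theta i s).
  move=> t s i Hs; apply: mF_B; first exact: mF_cst.
  by apply: mF_sum => tau Ht; apply: mFcbar; lia.
have mFbeta : forall t s i, (1 <= s <= T)%N -> (s <= t.+1)%N -> mF (Fam t) (beta i s).
  move=> t s i Hs Hst; apply/mF_pre => B0 mB0.
  apply: (gen_mono _ _ (Fmono s.-1 t _)); first lia.
  exact: ((hproc s Hs).2.2.1 i).2 B0 mB0.
pose Ev s i := [set w | viol_cost c g i w (theta s w) <=
                 beta i s w * rem_budget c g B theta i s w].
pose A t := [set w | forall s, (1 <= s <= t)%N -> forall i, Ev s i w].
have EvF : forall t s i, (1 <= s <= t)%N -> (t <= T)%N -> gen_sigma (Fam t) (Ev s i).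
  move=> t s i Hs HT; apply: gen_le; first by apply: mFcbar.
  apply: mF_M; first by apply: mFbeta; lia.
  by apply: mFrem; lia.
have AF : forall t, (t <= T)%N -> gen_sigma (Fam t) (A t).
  move=> t tT.
  have -> : A t = [set w | forall s, (s < t)%N -> [set w | forall i, Ev s.+1 i w] w].
    apply/seteqP; split => w /= Hw.
      by move=> s Hs i; apply: Hw; lia.
    by move=> [|s] Hs i; [lia|apply: Hw; lia].
  by apply: gen_forall_nat => s Hs; apply: gen_forall_fin => i; apply: EvF; lia.
have Perf : forall t, (t <= T)%N -> A t `<=` iteration_performed c g B theta t.+1.
  move=> t tT w Aw tau Htau i.
  rewrite /rem_budget big_nat_recr /=; last lia.
  have := Aw tau ltac:(lia) i; rewrite /Ev /rem_budget /=.
  have [hb1 hb2] := andP (((hproc tau ltac:(lia)).2.2.1 i).1 w).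
  have hc := hc0 i _ (ppos (g i w (theta tau w))).
  move: hc; rewrite /viol_cost.
  set S := \sum_(1 <= _ < tau) _; set C := c i _; set b := beta i tau w.
  move=> hc hE; move: hb1 hb2; rewrite -/b => hb1 hb2.
  have hBS : 0 <= B i - S.
    by nra.
  nra.
have Chain : forall t, (t <= T)%N ->
    ((\prod_(1 <= s < t.+1) (1 - eps s))%:E <= P (A t))%E.
  elim=> [|t IH] tT.
    rewrite big_geq // (_ : A 0 = setT) ?probability_setT //.
    by apply/seteqP; split=> // w _ s Hs; lia.
  have Ht1 : (1 <= t.+1 <= T)%N by lia.
  have [_ [_ [_ [h [_ [hc hb]]]]]] := hproc t.+1 Ht1.
  have AtF : F t (A t) by rewrite FE; apply: AF; lia.
  have mAt : measurable (A t) by apply: (Fmeas t); [lia|exact: AtF].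
  have e : P (A t.+1) = (\int[P]_(w in A t) (\prod_(i < N) h i w)%:E)%E.
    rewrite (hc.2 _ AtF); congr (P _); apply/seteqP; split.
      move=> w Aw; split; first by move=> i _; apply: Aw; lia.
      by move=> s Hs; apply: Aw; lia.
    move=> w [Hi Aw] s Hs i.
    have [->|ne] := eqVneq s t.+1; first exact: Hi.
    by apply: Aw; lia.
  have he : 0 <= 1 - eps t.+1 by have := heps t.+1 Ht1; lra.
  rewrite e big_nat_recr //= EFinM.
  apply: (@le_trans _ _ ((1 - eps t.+1)%:E * P (A t))%E).
    rewrite muleC; apply: lee_wpmul2l; first by rewrite lee_fin.
    by apply: IH; lia.
  rewrite -integral_cst //; apply: ge0_le_integral => //.
  all: try (by move=> w _; rewrite lee_fin).
  - apply/measurable_EFinP; apply: measurable_funTS => _ B0 mB0; rewrite setTI.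
    by apply: (Fmeas t); [lia|exact: hc.1].
  - by move=> w Aw; rewrite lee_fin; apply: hb; apply: Perf => //; lia.
have mremO : forall i s, measurable_fun setT (rem_budget c g B theta i s).
  move=> i s; apply: measurable_funB; first exact: measurable_cst.
  apply: mfun_sum_nat => tau _; rewrite /viol_cost.
  exact: (measurableT_comp (ndc i) (hgm tau i)).
have mperf : measurable (iteration_performed c g B theta T).
  have -> : iteration_performed c g B theta T = [set w | forall s, (s < T)%N ->
      [set w | (1 <= s)%N -> forall i, 0 <= rem_budget c g B theta i s.+1 w] w].
    apply/seteqP; split => w /= Hw.
      by move=> s Hs H1 i; apply: Hw; lia.
    by move=> s Hs i; apply: Hw; lia.
  apply: meas_forall_nat => s _ /=.
  case: (leqP 1 s) => hs.
    have -> : (fun w : Omega => true -> forall i, 0 <= rem_budget c g B theta i s.+1 w)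
        = [set w | forall i, 0 <= rem_budget c g B theta i s.+1 w].
      by apply/funext => w; apply/propext; split => Hw //; apply: Hw.
    apply: meas_forall_fin => i.
    have := measurable_fun_le measurableT (measurable_cst (0:R)) (mremO i s.+1).
    by rewrite setTI.
  have -> : (fun w : Omega => false -> forall i, 0 <= rem_budget c g B theta i s.+1 w)
      = setT by apply/funext => w; apply/propext; split => // _.
  exact: measurableT.
have msum : measurable [set w | forall i : 'I_N,
     (\sum_(1 <= t < T.+1) viol_cost c g i w (theta t w) <= B i)%R].
  apply: meas_forall_fin => i.
  have := @measurable_fun_le _ Omega R setT (fun w => \sum_(1 <= t < T.+1) viol_cost c g i w (theta t w)) (fun=> B i) measurableT.
  rewrite setTI; apply; last exact: measurable_cst.
  apply: mfun_sum_nat => tau _; rewrite /viol_cost.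
  exact: (measurableT_comp (ndc i) (hgm tau i)).
have mAT : measurable (A T) by apply: (Fmeas T) => //; rewrite FE; exact: AF.
rewrite hdeltaE opprB addrC subrK.
apply: le_trans (Chain T (leqnn T)) _.
apply: le_measure; rewrite ?inE //; first exact: measurableI.
move=> w Aw; have Hp := Perf T (leqnn T) w Aw; split.
  by move=> tau Ht i; apply: Hp; lia.
move=> i; case: (posnP T) => [T0|Tpos].
  by rewrite T0 big_geq.
have := Hp T ltac:(lia) i; rewrite /rem_budget subr_ge0 //.
Qed.
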